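(* Let $\alpha$ be an ordinal and let $X$ be a metric space with $X=\bigcup_{i\in I}X_i$. Suppose that $\{X_i\}_{i\in I}\in\mathfrak{C}_\alpha$ and that for every $r>0$ there is a subspace $Y(r)\subset X$ such that the collection $\{X_i\setminus Y(r)\}_{i\in I}$ is $r$-disjoint, where moreover $\{Y(r)\}_{r>0}\in\mathfrak{C}_\alpha$. Then $\{X\}\in\mathfrak{C}_\alpha$.
   Context: A family $\mathcal{U}$ of metric subspaces of a metric space $(X,d)$ is $r$-disjoint if $d(x,y)>r$ whenever $x\in U$, $y\in U'$, $U\neq U'$ in $\mathcal{U}$. For families $\mathcal{X},\mathcal{Y}$ and $R\in\mathbb{R}^{\mathbb{N}}$, $\mathcal{X}\xrightarrow{R}\mathcal{Y}$ means: there is an integer $k$ such that for each $X\in\mathcal{X}$ there are subcollections $\mathcal{U}_1,\dots,\mathcal{U}_k\subseteq\mathcal{Y}$ of subspaces of $X$, each $\mathcal{U}_i$ being $R_i$-disjoint, with $\bigcup_i\mathcal{U}_i$ covering $X$. A family is bounded if the diameters of its members are uniformly bounded. $\mathfrak{C}_0$ is the class of bounded families; for an ordinal $\alpha>0$, $\mathfrak{C}_\alpha$ is the class of families $\mathcal{X}$ such that for every $R\in\mathbb{R}^{\mathbb{N}}$ there exist $\beta<\alpha$ and $\mathcal{Y}\in\mathfrak{C}_\beta$ with $\mathcal{X}\xrightarrow{R}\mathcal{Y}$. All subspaces carry the induced metric. *)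

(* Defs.v *)
From Stdlib Require Import Reals.
Open Scope R_scope.

Definition is_metric {M : Type} (d : M -> M -> R) : Prop :=
  (forall x y, 0 <= d x y) /\
  (forall x y, d x y = 0 <-> x = y) /\
  (forall x y, d x y = d y x) /\
  (forall x y z, d x z <= d x y + d y z).

(* Subspaces of the ambient metric space M are subsets (induced metric);
   a family is a collection of subspaces. *)
Definition subspace (M : Type) := M -> Prop.
Definition family (M : Type) := subspace M -> Prop.

Definition r_disjoint {M : Type} (d : M -> M -> R) (r : R) (F : family M) : Prop :=
  forall U U' x y, F U -> F U' -> U <> U' -> U x -> U' y -> d x y > r.

Definition bounded_family {M : Type} (d : M -> M -> R) (F : family M) : Prop :=
  exists D : R, forall U x y, F U -> U x -> U y -> d x y <= D.

Definition arrow {M : Type} (d : M -> M -> R) (Rs : nat -> R)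
    (Xf Yf : family M) : Prop :=
  exists k : nat, forall X0, Xf X0 ->
    exists Us : nat -> family M,
      (forall i, (1 <= i <= k)%nat ->
         (forall U, Us i U -> Yf U /\ (forall x, U x -> X0 x)) /\
         r_disjoint d (Rs i) (Us i)) /\
      (forall x, X0 x -> exists i U, (1 <= i <= k)%nat /\ Us i U /\ U x).

(* The classes C_alpha, indexed by the elements of a well-ordered type
   (O, lt); the bottom element plays the role of the ordinal 0.  This is
   the least predicate satisfying the defining recursion, which (lt being
   well-founded) is exactly the transfinite recursive definition. *)
Inductive inC {M : Type} (d : M -> M -> R) {O : Type} (lt : O -> O -> Prop)
  : O -> family M -> Prop :=
| inC_zero : forall (a : O) (F : family M),
    (forall b, ~ lt b a) -> bounded_family d F -> inC d lt a F
| inC_pos : forall (a : O) (F : family M),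
    (exists b, lt b a) ->
    (forall Rs : nat -> R, exists b, lt b a /\
        exists G : family M, inC d lt b G /\ arrow d Rs F G) ->
    inC d lt a F.

Definition well_order {O : Type} (lt : O -> O -> Prop) : Prop :=
  well_founded lt /\
  (forall a b c, lt a b -> lt b c -> lt a c) /\
  (forall a b, lt a b \/ a = b \/ lt b a).

(* Main.v *)
Require Import Defs.
From Stdlib Require Import Reals.
From Stdlib Require Import Classical ClassicalEpsilon Lia Lra.
Require Import Defs.
Open Scope R_scope.

Definition sub {M : Type} (F G : family M) : family M :=
  fun U => exists V, (F V \/ G V) /\ (forall x, U x -> V x).

Lemma bounded_inv {M : Type} (d : M -> M -> R) {O : Type} (lt : O -> O -> Prop) a F :
  (forall b, ~ lt b a) -> inC d lt a F -> bounded_family d F.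
Proof.
  intros Hm H. destruct H as [a F _ Hb | a F [b Hb] _]. exact Hb. exfalso; exact (Hm b Hb).
Qed.

Lemma pos_inv {M : Type} (d : M -> M -> R) {O : Type} (lt : O -> O -> Prop) a F :
  (exists b, lt b a) -> inC d lt a F -> forall Rs, exists b, lt b a /\
        exists G : family M, inC d lt b G /\ arrow d Rs F G.
Proof.
  intros [b0 Hb0] H. destruct H as [a F Hm _| a F _ H]. exfalso; exact (Hm b0 Hb0). exact H.
Qed.

Lemma arrow_restrict {M : Type} (d : M -> M -> R) Rs (F F1 : family M) :
  arrow d Rs F F1 -> exists k1, forall k, (k1 <= k)%nat -> forall V U, F V ->
  (forall x, U x -> V x) -> exists Us : nat -> family M,
  (forall i, (1<=i<=k)%nat -> (forall W, Us i W -> (exists W0, F1 W0 /\ forall x, W x -> W0 x)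
     /\ (forall x, W x -> U x)) /\ r_disjoint d (Rs i) (Us i)) /\
  (forall x, U x -> exists i W, (1<=i<=k)%nat /\ Us i W /\ W x).
Proof.
 intros [k1 Hk]. exists k1. intros k Hkk V U HV HUV.
 destruct (Hk V HV) as [Us [H1 H2]].
 exists (fun i W => (1 <= i <= k1)%nat /\ exists W0, Us i W0 /\ W = (fun x => W0 x /\ U x)).
 split.
 - intros i Hi. split.
   + intros W [Hi1 [W0 [HW0 ->]]]. split. exists W0. split. apply (proj1 (H1 i Hi1) W0 HW0).
     intros x [? ?]; assumption. intros x [? ?]; assumption.
   + intros W W' x y [Hi1 [W0 [HW0 ->]]] [_ [W0' [HW0' ->]]] Hne [Hx _] [Hy _].
     apply (proj2 (H1 i Hi1) W0 W0' x y HW0 HW0'); auto. intro; subst; apply Hne; reflexivity.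
 - intros x Hx. destruct (H2 x (HUV x Hx)) as [i [W0 [Hi [HW0 HW0x]]]].
   exists i, (fun y => W0 y /\ U y). split. lia. split. split. exact Hi. exists W0. split; auto. split; auto.
Qed.

Lemma arrow_sub {M : Type} (d : M -> M -> R) Rs (F F1 G G1 : family M) :
  arrow d Rs F F1 -> arrow d Rs G G1 -> arrow d Rs (sub F G) (sub F1 G1).
Proof.
  intros HF HG. destruct (arrow_restrict _ _ _ _ HF) as [k1 HF'].
  destruct (arrow_restrict _ _ _ _ HG) as [k2 HG'].
  exists (k1+k2)%nat. intros U [V [[HV|HV] HUV]].
  - destruct (HF' (k1+k2)%nat ltac:(lia) V U HV HUV) as [Us [H1 H2]]. exists Us. split; [|exact H2].
    intros i Hi. destruct (H1 i Hi) as [H3 H4]. split; [|exact H4]. intros W HW.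
    destruct (H3 W HW) as [[W0 [HW0 HWW0]] HWU]. split; [|exact HWU]. exists W0.
    split; [left; exact HW0| exact HWW0].
  - destruct (HG' (k1+k2)%nat ltac:(lia) V U HV HUV) as [Us [H1 H2]]. exists Us. split; [|exact H2].
    intros i Hi. destruct (H1 i Hi) as [H3 H4]. split; [|exact H4]. intros W HW.
    destruct (H3 W HW) as [[W0 [HW0 HWW0]] HWU]. split; [|exact HWU]. exists W0.
    split; [right; exact HW0| exact HWW0].
Qed.

Lemma arrow_self {M : Type} (d : M -> M -> R) Rs (F : family M) : arrow d Rs F F.
Proof.
  exists 1%nat. intros X0 HX0. exists (fun _ U => U = X0). split.
  - intros i Hi. split. intros U ->. split; auto. intros U U' x y -> -> Hne. exfalso; apply Hne; reflexivity.
  - intros x Hx. exists 1%nat, X0. split; [lia|split; auto].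
Qed.

Lemma step {M : Type} (d : M -> M -> R) {O : Type} (lt : O -> O -> Prop) a c F :
  well_order lt -> (a = c \/ lt a c) -> (exists e, lt e c) -> inC d lt a F ->
  forall Rs, exists e1, lt e1 c /\ exists F1, inC d lt e1 F1 /\ arrow d Rs F F1.
Proof.
  intros [_ [Htr _]] Hac [e He] H Rs. destruct (classic (exists b, lt b a)) as [Hb|Hb].
  - destruct (pos_inv d lt a F Hb H Rs) as [b [Hba [G [HG HA]]]]. exists b. split.
    destruct Hac as [->|Hac]; [exact Hba| exact (Htr _ _ _ Hba Hac)]. exists G; auto.
  - exists a. split. destruct Hac as [->|Hac]; [exfalso; apply Hb; exists e; exact He | exact Hac].
    exists F. split; [exact H| apply arrow_self].
Qed.

Lemma union_lemma {M : Type} (d : M -> M -> R) {O : Type} (lt : O -> O -> Prop) :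
  well_order lt -> forall c a b (F G : family M), (a = c \/ lt a c) -> (b = c \/ lt b c) ->
  inC d lt a F -> inC d lt b G -> inC d lt c (sub F G).
Proof.
  intros Hwo c. pose proof Hwo as [Hwf [Htr Htot]].
  induction c as [c IH] using (well_founded_induction Hwf).
  intros a b F G Hac Hbc HF HG.
  destruct (classic (exists e, lt e c)) as [Hc|Hc].
  - apply inC_pos; [exact Hc|]. intros Rs.
    destruct (step d lt a c F Hwo Hac Hc HF Rs) as [e1 [He1 [F1 [HF1 HA1]]]].
    destruct (step d lt b c G Hwo Hbc Hc HG Rs) as [e2 [He2 [G1 [HG1 HA2]]]].
    assert (Hsub := arrow_sub _ _ _ _ _ _ HA1 HA2).
    destruct (Htot e1 e2) as [H12|[H12|H12]].
    + exists e2. split; [exact He2|]. exists (sub F1 G1). split; [|exact Hsub].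
      apply (IH e2 He2 e1 e2); auto.
    + subst e2. exists e1. split; [exact He1|]. exists (sub F1 G1). split; [|exact Hsub].
      apply (IH e1 He1 e1 e1); auto.
    + exists e1. split; [exact He1|]. exists (sub F1 G1). split; [|exact Hsub].
      apply (IH e1 He1 e1 e2); auto.
  - assert (Hm : forall e, ~ lt e c) by (intros e He; apply Hc; exists e; exact He).
    assert (a = c) by (destruct Hac as [?|H]; [assumption| exfalso; exact (Hm a H)]). subst a.
    assert (b = c) by (destruct Hbc as [?|H]; [assumption| exfalso; exact (Hm b H)]). subst b.
    apply inC_zero; [exact Hm|].
    destruct (bounded_inv d lt c F Hm HF) as [D1 HD1].
    destruct (bounded_inv d lt c G Hm HG) as [D2 HD2].
    exists (Rmax D1 D2). intros U x y [V [[HV|HV] HUV]] Hx Hy.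
    + eapply Rle_trans; [apply (HD1 V x y HV (HUV x Hx) (HUV y Hy))| apply Rmax_l].
    + eapply Rle_trans; [apply (HD2 V x y HV (HUV x Hx) (HUV y Hy))| apply Rmax_r].
Qed.

Fixpoint mx (f : nat -> R) (n : nat) : R :=
  match n with 0%nat => 0 | S m => Rmax (mx f m) (f (S m)) end.

Lemma mx_ge f n j : (1 <= j <= n)%nat -> f j <= mx f n.
Proof.
  induction n; intros Hj. lia. simpl. destruct (Nat.eq_dec j (S n)) as [->|Hne].
  apply Rmax_r. eapply Rle_trans; [apply IHn; lia| apply Rmax_l].
Qed.

Lemma mx_nonneg f n : 0 <= mx f n.
Proof. induction n; simpl. lra. eapply Rle_trans; [exact IHn| apply Rmax_l]. Qed.

Lemma level0 (M : Type) (d : M -> M -> R) (I : Type) (Xs : I -> subspace M)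
  (Y : R -> subspace M) :
  is_metric d ->
  (forall x : M, exists i, Xs i x) ->
  bounded_family d (fun U => exists i, U = Xs i) ->
  (forall r, 0 < r ->
     r_disjoint d r (fun U => exists i, U = (fun x => Xs i x /\ ~ Y r x))) ->
  bounded_family d (fun U => exists r, 0 < r /\ U = Y r) ->
  bounded_family d (fun U => U = (fun _ : M => True)).
Proof.
  intros [Hnn [Hid [Hsym Htri]]] Hcov [D1 HD1] Hdisj [D2 HD2].
  set (K := Rmax 0 (Rmax D1 D2)).
  assert (HK0 : 0 <= K) by apply Rmax_l.
  assert (HK1 : D1 <= K) by (eapply Rle_trans; [apply Rmax_l|apply Rmax_r]).
  assert (HK2 : D2 <= K) by (eapply Rle_trans; [apply Rmax_r|apply Rmax_r]).
  assert (three : forall u v w, d u v > K -> d v w > K -> d u w > K -> False).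
  { intros u v w H1 H2 H3. set (r := d u v + d v w + d u w + 1).
    pose proof (Hnn u v). pose proof (Hnn v w). pose proof (Hnn u w).
    assert (Hr : 0 < r) by (unfold r; lra).
    assert (pair : forall p q, d p q > K -> d p q < r -> Y r p \/ Y r q).
    { intros p q Hpq Hr'. destruct (classic (Y r p)) as [?|Hp]; [left; auto|].
      destruct (classic (Y r q)) as [?|Hq]; [right; auto|]. exfalso.
      destruct (Hcov p) as [i Hi]. destruct (Hcov q) as [j Hj].
      destruct (classic ((fun x => Xs i x /\ ~ Y r x) = (fun x => Xs j x /\ ~ Y r x))) as [E|E].
      - pose proof (f_equal (fun f => f q) E) as Eq; simpl in Eq.
        assert (Hq' : Xs i q /\ ~ Y r q) by (rewrite Eq; auto).
        pose proof (HD1 (Xs i) p q (ex_intro _ i eq_refl) Hi (proj1 Hq')). lra.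
      - pose proof (Hdisj r Hr _ _ p q (ex_intro _ i eq_refl) (ex_intro _ j eq_refl) E
          (conj Hi Hp) (conj Hj Hq)). lra. }
    assert (both : forall p q, Y r p -> Y r q -> d p q <= K).
    { intros p q Hp Hq. pose proof (HD2 (Y r) p q (ex_intro _ r (conj Hr eq_refl)) Hp Hq). lra. }
    destruct (pair u v ltac:(lra) ltac:(unfold r; lra));
    destruct (pair v w ltac:(lra) ltac:(unfold r; lra));
    destruct (pair u w ltac:(lra) ltac:(unfold r; lra));
    first [ pose proof (both u v ltac:(assumption) ltac:(assumption)); lra
          | pose proof (both v w ltac:(assumption) ltac:(assumption)); lra
          | pose proof (both u w ltac:(assumption) ltac:(assumption)); lra ]. }
  apply NNPP; intro Hnb.
  assert (big : forall D, exists x y, d x y > D).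
  { intro D. apply NNPP; intro Hn. apply Hnb. exists D. intros U x y -> _ _.
    apply Rnot_gt_le. intro Hg. apply Hn. exists x, y. exact Hg. }
  destruct (big K) as [x [y Hxy]].
  destruct (big (2 * d x y + 2*K)) as [z [w Hzw]].
  pose proof (Htri z x w). pose proof (Htri x y z). pose proof (Htri x y w).
  pose proof (Hsym z x). pose proof (Hnn x y).
  destruct (Rlt_or_le (d x y + K) (d z x)) as [Hz|Hz].
  - apply (three x y z); lra.
  - apply (three x y w); lra.
Qed.

Theorem theorem4p3 (O : Type) (lt : O -> O -> Prop) (alpha : O)
  (M : Type) (d : M -> M -> R) (I : Type) (Xs : I -> subspace M)
  (Y : R -> subspace M) :
  well_order lt ->
  is_metric d ->
  (forall x : M, exists i, Xs i x) ->
  inC d lt alpha (fun U => exists i, U = Xs i) ->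
  (forall r, 0 < r ->
     r_disjoint d r (fun U => exists i, U = (fun x => Xs i x /\ ~ Y r x))) ->
  inC d lt alpha (fun U => exists r, 0 < r /\ U = Y r) ->
  inC d lt alpha (fun U => U = (fun _ : M => True)).
Proof.
  intros Hwo Hmet Hcov HX Hdisj HY.
  destruct (classic (exists b, lt b alpha)) as [Ha|Ha].
  2: { assert (Hm : forall b, ~ lt b alpha) by (intros b Hb; apply Ha; exists b; auto).
       apply inC_zero; [exact Hm|].
       apply (level0 M d I Xs Y Hmet Hcov (bounded_inv d lt alpha _ Hm HX) Hdisj
                (bounded_inv d lt alpha _ Hm HY)). }
  apply inC_pos; [exact Ha|]. intros Rs.
  destruct (pos_inv _ _ _ _ Ha HY Rs) as [b1 [Hb1 [Hf [HHf HAY]]]].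
  destruct HAY as [k1 HAY].
  set (Rs' := fun j => Rs (j + k1)%nat).
  destruct (pos_inv _ _ _ _ Ha HX Rs') as [b2 [Hb2 [G [HG HAX]]]].
  destruct HAX as [k2 HAX].
  set (r := mx Rs' k2 + 1).
  assert (Hr : 0 < r) by (pose proof (mx_nonneg Rs' k2); unfold r; lra).
  destruct (HAY (Y r) (ex_intro _ r (conj Hr eq_refl))) as [UsY [HY1 HY2]].
  set (Sx := fun i => fun x => Xs i x /\ ~ Y r x).
  assert (ex_sel : forall T : subspace M, exists p : option (I * (nat -> family M)),
    match p with
    | Some (i, Us) => T = Sx i /\
        ((forall j, (1 <= j <= k2)%nat ->
          (forall U, Us j U -> G U /\ (forall x, U x -> Xs i x)) /\
          r_disjoint d (Rs' j) (Us j)) /\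
         (forall x, Xs i x -> exists j U, (1 <= j <= k2)%nat /\ Us j U /\ U x))
    | None => ~ (exists i, T = Sx i) end).
  { intro T. destruct (classic (exists i, T = Sx i)) as [[i ->]|Hn].
    - destruct (HAX (Xs i) (ex_intro _ i eq_refl)) as [Us HUs]. exists (Some (i, Us)).
      split; [reflexivity| exact HUs].
    - exists None; exact Hn. }
  set (sel := fun T => proj1_sig (constructive_indefinite_description _ (ex_sel T))).
  assert (Hsel : forall T, match sel T with
    | Some (i, Us) => T = Sx i /\
        ((forall j, (1 <= j <= k2)%nat ->
          (forall U, Us j U -> G U /\ (forall x, U x -> Xs i x)) /\
          r_disjoint d (Rs' j) (Us j)) /\
         (forall x, Xs i x -> exists j U, (1 <= j <= k2)%nat /\ Us j U /\ U x))
    | None => ~ (exists i, T = Sx i) end)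
    by (intro T; exact (proj2_sig (constructive_indefinite_description _ (ex_sel T)))).
  clearbody sel.
  pose proof Hwo as [Hwf [Htr Htot]].
  assert (Hfin : forall e, lt e alpha -> (b1 = e \/ lt b1 e) -> (b2 = e \/ lt b2 e) ->
     exists b, lt b alpha /\ exists G0, inC d lt b G0 /\
       arrow d Rs (fun U => U = fun _ => True) G0).
  { intros e He H1 H2. exists e. split; auto. exists (sub Hf G). split.
    { apply (union_lemma d lt Hwo e b1 b2 Hf G); auto. }
    exists (k1 + k2)%nat. intros X0 ->.
    exists (fun i W => if (i <=? k1)%nat then UsY i W else
       exists T i0 Us V, sel T = Some (i0, Us) /\ Us (i - k1)%nat V /\ W = (fun x => V x /\ T x)).
    split.
    - intros i Hi. destruct (Nat.leb_spec i k1) as [Hle|Hgt].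
      + destruct (HY1 i (conj (proj1 Hi) Hle)) as [A B]. split; [|exact B].
        intros U HU. split; [|auto]. exists U. split; [left; apply A; auto| auto].
      + split.
        * intros W [T [i0 [Us [V [Hs [HV ->]]]]]]. pose proof (Hsel T) as HT; rewrite Hs in HT.
          destruct HT as [-> [Hg _]]. destruct (Hg (i - k1)%nat ltac:(lia)) as [A _].
          destruct (A V HV) as [GV _]. split; [|auto]. exists V.
          split; [right; exact GV| intros x [? ?]; auto].
        * intros W W' x y [T [i0 [Us [V [Hs [HV ->]]]]]] [T' [i0' [Us' [V' [Hs' [HV' ->]]]]]]
            Hne [Vx Tx] [Vy Ty].
          pose proof (Hsel T) as HT; rewrite Hs in HT. destruct HT as [ET [Hg _]].
          pose proof (Hsel T') as HT'; rewrite Hs' in HT'. destruct HT' as [ET' _].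
          assert (Hb : Rs' (i - k1)%nat <= mx Rs' k2) by (apply mx_ge; lia).
          assert (Hri : Rs' (i - k1)%nat = Rs i) by (unfold Rs'; f_equal; lia).
          destruct (classic (T = T')) as [<-|HTT].
          -- rewrite Hs in Hs'. injection Hs' as <- <-.
             destruct (Hg (i - k1)%nat ltac:(lia)) as [_ Hd].
             assert (HVV : V <> V') by (intro; subst; apply Hne; reflexivity).
             pose proof (Hd V V' x y HV HV' HVV Vx Vy). lra.
          -- pose proof (Hdisj r Hr T T' x y (ex_intro _ i0 ET) (ex_intro _ i0' ET') HTT Tx Ty).
             unfold r in *. lra.
    - intros x _. destruct (classic (Y r x)) as [Hyx|Hyx].
      + destruct (HY2 x Hyx) as [i [U [Hi [HU HUx]]]]. exists i, U. split; [lia|].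
        split; [|auto]. destruct (Nat.leb_spec i k1); [exact HU| lia].
      + destruct (Hcov x) as [i0 Hi0]. pose proof (Hsel (Sx i0)) as HT.
        destruct (sel (Sx i0)) as [[i1 Us]|] eqn:Es.
        * destruct HT as [ES [_ Hc]].
          assert (Hx1 : Sx i1 x) by (rewrite <- ES; split; auto).
          destruct Hx1 as [Xi1 _]. destruct (Hc x Xi1) as [j [V [Hj [HV Vx]]]].
          exists (j + k1)%nat, (fun y => V y /\ Sx i0 y). split; [lia|]. split.
          -- destruct (Nat.leb_spec (j+k1) k1); [lia|]. exists (Sx i0), i1, Us, V.
             split; [exact Es|]. split; [|reflexivity].
             replace (j + k1 - k1)%nat with j by lia. exact HV.
          -- split; auto. split; auto.
        * exfalso; apply HT; exists i0; reflexivity. }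
  destruct (Htot b1 b2) as [h|[h|h]].
  - apply (Hfin b2); auto.
  - subst b2. apply (Hfin b1); auto.
  - apply (Hfin b1); auto.
Qed.
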